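(* Under the setup below, assume Conditions 1 and 2 hold and $p_\lambda$ is continuously differentiable on $(0,\infty)$. Let $\widehat\beta$ be a global minimizer of $L$ and $\delta=\widehat\beta-\beta_0$. On the event $\mathscr{E}=\{\|n^{-1}X^T\varepsilon\|_\infty\le\lambda_0/2\}$, $$n^{-1}\|X\delta\|_2^2+\lambda_0\|\widetilde\delta_2\|_1\le 7\lambda_0\|\widetilde\delta_1\|_1,$$ and consequently $\|\widetilde\delta_2\|_1\le7\|\widetilde\delta_1\|_1$, $\|\widetilde\delta_1\|_2\le 7\lambda_0s^{1/2}/\kappa^2$ and $\|\widetilde\delta_2\|_2\le 56\lambda_0 s^{1/2}/\kappa^2$, where $\kappa=\kappa(s,7)$.
   Context: Setup: linear model $y=X\beta_0+\varepsilon$ with $y\in\mathbb{R}^n$, deterministic design $X=(x_1,\dots,x_p)\in\mathbb{R}^{n\times p}$ with $\|x_j\|_2=n^{1/2}$ for all $j$, unknown $\beta_0\in\mathbb{R}^p$, noise $\varepsilon\in\mathbb{R}^n$. The support of $\beta_0$ is $\{1,\dots,s\}$: $\beta_0=(\widetilde\beta_{0,1}^T,0^T)^T$ with all $s$ entries of $\widetilde\beta_{0,1}$ nonzero. For $a\in\mathbb{R}^p$, $\widetilde a_1\in\mathbb{R}^s$ is its first $s$ components and $\widetilde a_2\in\mathbb{R}^{p-s}$ its remaining components. The penalty $p_\lambda:[0,\infty)\to[0,\infty)$, with $p_\lambda(0)=0$, is indexed by $\lambda\ge0$, and $p_\lambda(\infty)=\lim_{t\to\infty}p_\lambda(t)$.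 The objective is $L(\beta)=(2n)^{-1}\|y-X\beta\|_2^2+\lambda_0\|\beta\|_1+\sum_{j=1}^p p_\lambda(|\beta_j|)$ with $\lambda_0=c\{(\log p)/n\}^{1/2}$ for a fixed constant $c>0$. Condition 1: for some constant $\kappa_0>0$, $\min\{n^{-1/2}\|X\delta\|_2:\|\delta\|_2=1,\ \|\delta\|_0<2s\}\ge\kappa_0$, and $\kappa=\kappa(s,7)=\min\{n^{-1/2}\|X\delta\|_2/(\|\widetilde\delta_1\|_2\vee\|\widetilde\delta_2'\|_2):\ \delta\ne0,\ \|\widetilde\delta_2\|_1\le 7\|\widetilde\delta_1\|_1\}>0$, where $\widetilde\delta_2'$ is the subvector of $\widetilde\delta_2$ of its $s$ entries of largest absolute value. Condition 2: $p_\lambda$ is increasing and concave on $[0,\infty)$, $p_\lambda(t)\ge \tfrac12\{\lambda^2-(\lambda-t)_+^2\}$ on $[0,\lambda]$, $p_\lambda'\{(1-c_1)\lambda\}\le c_1\lambda$ for some $c_1\in[0,1)$, $-p_\lambda''$ is decreasing on $[0,(1-c_1)\lambda]$; moreover $p_\lambda'\{(1-c_1)\lambda\}\le\lambda_0/4$ and $\min_{1\le j\le s}|\beta_{0,j}|>\max\{(1-c_1)\lambda,\ 2\kappa_0^{-1}p_\lambda^{1/2}(\infty)\}$. *)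

(* Defs.v *)
From Stdlib Require Import Reals Lra Lia List.
Import ListNotations.
Open Scope R_scope.

(* Vectors in R^m are functions nat -> R; only indices 0..m-1 are used.
   Indices are 0-based: the paper's index j corresponds to j-1 here.     *)

Fixpoint sumR (m : nat) (f : nat -> R) : R :=
  match m with
  | O => 0
  | S k => sumR k f + f k
  end.

Definition sum_range (a b : nat) (f : nat -> R) : R :=
  sumR (b - a) (fun k => f (a + k)%nat).

Definition norm1_range (a b : nat) (v : nat -> R) : R := sum_range a b (fun j => Rabs (v j)).
Definition norm2_range (a b : nat) (v : nat -> R) : R := sqrt (sum_range a b (fun j => v j ^ 2)).

Definition norm0 (p : nat) (v : nat -> R) : nat :=
  length (filter (fun j => if Req_EM_T (v j) 0 then false else true) (seq 0 p)).

(* X : matrix n x p, X i j = entry (row i, column j);  (X b)_i *)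
Definition Xmul (p : nat) (X : nat -> nat -> R) (b : nat -> R) : nat -> R :=
  fun i => sumR p (fun j => X i j * b j).

Definition XTmul (n : nat) (X : nat -> nat -> R) (e : nat -> R) : nat -> R :=
  fun j => sumR n (fun i => X i j * e i).

Definition objL (n p : nat) (X : nat -> nat -> R) (y : nat -> R) (lam0 : R)
  (pl : R -> R) (b : nat -> R) : R :=
  / (2 * INR n) * sumR n (fun i => (y i - Xmul p X b i) ^ 2)
  + lam0 * sumR p (fun j => Rabs (b j))
  + sumR p (fun j => pl (Rabs (b j))).

(* S is a list of indices of s entries of largest absolute value of the
   subvector (v_s, ..., v_{p-1}) (i.e. the support of widetilde v_2'). *)
Definition top_s_set (s p : nat) (v : nat -> R) (S : list nat) : Prop :=
  NoDup S /\ length S = Nat.min s (p - s) /\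
  (forall j, In j S -> (s <= j < p)%nat) /\
  (forall j k, In j S -> (s <= k < p)%nat -> ~ In k S -> Rabs (v k) <= Rabs (v j)).

Definition sumsq_list (v : nat -> R) (S : list nat) : R :=
  fold_right (fun j acc => v j ^ 2 + acc) 0 S.

(* The set of ratios whose minimum is kappa(s,7). *)
Definition kappa_ratios (n p s : nat) (X : nat -> nat -> R) (r : R) : Prop :=
  exists (d : nat -> R) (S : list nat),
    (exists j, (j < p)%nat /\ d j <> 0) /\
    norm1_range s p d <= 7 * norm1_range 0 s d /\
    top_s_set s p d S /\
    r = (/ sqrt (INR n) * sqrt (sumR n (fun i => Xmul p X d i ^ 2)))
        / Rmax (norm2_range 0 s d) (sqrt (sumsq_list d S)).

Definition is_glb_R (E : R -> Prop) (m : R) : Prop :=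
  (forall x, E x -> m <= x) /\ (forall b, (forall x, E x -> b <= x) -> b <= m).

(* Main.v *)
Require Import Defs.
From Stdlib Require Import Reals Lra Lia List Psatz Arith Permutation FunctionalExtensionality.
Import ListNotations.
Open Scope R_scope.


Lemma sumR_ext m f g : (forall k, (k < m)%nat -> f k = g k) -> sumR m f = sumR m g.
Proof. induction m; intros H; simpl; auto. rewrite IHm by (intros; apply H; lia). rewrite (H m) by lia. auto. Qed.

Lemma sumR_le m f g : (forall k, (k < m)%nat -> f k <= g k) -> sumR m f <= sumR m g.
Proof. induction m; intros H; simpl; [lra|]. assert (H1 := IHm (fun k Hk => H k ltac:(lia))). assert (H2 := H m ltac:(lia)). lra. Qed.

Lemma sumR_plus m f g : sumR m (fun k => f k + g k) = sumR m f + sumR m g.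
Proof. induction m; simpl; [lra|]. rewrite IHm. lra. Qed.

Lemma sumR_minus m f g : sumR m (fun k => f k - g k) = sumR m f - sumR m g.
Proof. induction m; simpl; [lra|]. rewrite IHm. lra. Qed.

Lemma sumR_scal m c f : sumR m (fun k => c * f k) = c * sumR m f.
Proof. induction m; simpl; [lra|]. rewrite IHm. lra. Qed.

Lemma sumR_zero m : sumR m (fun _ => 0) = 0.
Proof. induction m; simpl; lra. Qed.

Lemma sumR_nonneg m f : (forall k, (k < m)%nat -> 0 <= f k) -> 0 <= sumR m f.
Proof. intros H. rewrite <- (sumR_zero m). apply sumR_le. auto. Qed.

Lemma sumR_split a b f : sumR (a + b) f = sumR a f + sumR b (fun k => f (a + k)%nat).
Proof. induction b; simpl. rewrite Nat.add_0_r. lra. rewrite Nat.add_succ_r. simpl. rewrite IHb. lra. Qed.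

Lemma sumR_single m f j : (j < m)%nat -> (forall k, (k < m)%nat -> k <> j -> f k = 0) -> sumR m f = f j.
Proof.
  induction m; intros Hj H; [lia|]. simpl.
  destruct (Nat.eq_dec j m) as [->|Hne].
  - rewrite (sumR_ext m f (fun _ => 0)). rewrite sumR_zero. lra. intros; apply H; lia.
  - rewrite IHm by (auto; lia). rewrite (H m) by lia. lra.
Qed.

Lemma sumR_swap n m (F : nat -> nat -> R) :
  sumR n (fun i => sumR m (fun j => F i j)) = sumR m (fun j => sumR n (fun i => F i j)).
Proof. induction n; simpl. rewrite sumR_zero; auto. rewrite IHn. rewrite <- sumR_plus. auto. Qed.

Lemma sumR_CS m f : (sumR m f) ^ 2 <= INR m * sumR m (fun k => f k ^ 2).
Proof.
  induction m. simpl. lra.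
  change (sumR (S m) f) with (sumR m f + f m).
  change (sumR (S m) (fun k => f k ^ 2)) with (sumR m (fun k => f k ^ 2) + f m ^ 2).
  rewrite S_INR.
  set (Sm := sumR m f) in *. set (Q := sumR m (fun k => f k ^ 2)) in *.
  assert (HQ : 0 <= Q) by (apply sumR_nonneg; intros; nra).
  set (M := INR m) in *. set (x := f m).
  assert (HM : 0 <= M) by (unfold M; apply pos_INR).
  destruct (Req_dec M 0) as [H0|H0].
  - clearbody Sm Q M x. subst M. assert (Sm = 0) by nra. subst Sm. nra.
  - clearbody Sm Q M x. assert (HM' : 0 < M) by lra.
    assert (Hsq : 0 <= (Sm - M*x)^2) by apply pow2_ge_0.
    assert (H2 : M * (2 * Sm * x) <= M * (Q + M * x ^ 2)) by nra.
    assert (2 * Sm * x <= Q + M * x^2) by (apply (Rmult_le_reg_l M); lra).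
    nra.
Qed.

Lemma sqrt_add_le A B : 0 <= A -> 0 <= B -> sqrt (A + B) <= sqrt A + sqrt B.
Proof.
  intros HA HB. rewrite <- (sqrt_square (sqrt A + sqrt B)).
  apply sqrt_le_1_alt. assert (H1 := sqrt_sqrt A HA). assert (H2 := sqrt_sqrt B HB).
  assert (0 <= sqrt A) by apply sqrt_pos. assert (0 <= sqrt B) by apply sqrt_pos. nra.
  assert (0 <= sqrt A) by apply sqrt_pos. assert (0 <= sqrt B) by apply sqrt_pos. lra.
Qed.


Definition upd (b : nat -> R) (j : nat) (v : R) : nat -> R :=
  fun k => if Nat.eq_dec k j then v else b k.

Lemma sumR_upd m (g : R -> R) b j v : (j < m)%nat ->
  sumR m (fun k => g (upd b j v k)) = sumR m (fun k => g (b k)) + g v - g (b j).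
Proof.
  intros Hj.
  assert (H : sumR m (fun k => g (upd b j v k) - g (b k)) = g v - g (b j)).
  { rewrite (sumR_single m _ j Hj).
    - unfold upd. destruct (Nat.eq_dec j j); [auto|congruence].
    - intros k Hk Hne. unfold upd. destruct (Nat.eq_dec k j); [congruence|lra]. }
  rewrite sumR_minus in H. lra.
Qed.

Lemma Xmul_upd p X b j v i : (j < p)%nat ->
  Xmul p X (upd b j v) i = Xmul p X b i + X i j * (v - b j).
Proof.
  intros Hj. unfold Xmul.
  assert (H : sumR p (fun k => X i k * upd b j v k - X i k * b k) = X i j * (v - b j)).
  { rewrite (sumR_single p _ j Hj).
    - unfold upd. destruct (Nat.eq_dec j j); [lra|congruence].
    - intros k Hk Hne. unfold upd. destruct (Nat.eq_dec k j); [congruence|lra]. }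
  rewrite sumR_minus in H. lra.
Qed.

Lemma Xmul_sub p X b c i : Xmul p X (fun k => b k - c k) i = Xmul p X b i - Xmul p X c i.
Proof. unfold Xmul. rewrite <- sumR_minus. apply sumR_ext. intros; ring. Qed.

Lemma Xmul_comb p X u v th i :
  Xmul p X (fun k => (1 - th) * u k + th * v k) i = (1 - th) * Xmul p X u i + th * Xmul p X v i.
Proof. unfold Xmul. rewrite <- !sumR_scal, <- sumR_plus. apply sumR_ext. intros; ring. Qed.

Lemma Xmul_ext p X u v i : (forall k, (k < p)%nat -> u k = v k) -> Xmul p X u i = Xmul p X v i.
Proof. intros H. unfold Xmul. apply sumR_ext. intros k Hk. rewrite H; auto. Qed.

Lemma obj_upd n p X y lam0 pl b j v :
  (0 < n)%nat -> (j < p)%nat -> sumR n (fun i => X i j ^ 2) = INR n ->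
  objL n p X y lam0 pl (upd b j v) - objL n p X y lam0 pl b =
  - (v - b j) * (sumR n (fun i => X i j * (y i - Xmul p X b i)) / INR n)
  + (v - b j) ^ 2 / 2 + lam0 * (Rabs v - Rabs (b j)) + (pl (Rabs v) - pl (Rabs (b j))).
Proof.
  intros Hn Hj Hc. unfold objL.
  rewrite (sumR_upd p Rabs b j v Hj). rewrite (sumR_upd p (fun x => pl (Rabs x)) b j v Hj).
  set (u := v - b j).
  assert (E : sumR n (fun i => (y i - Xmul p X (upd b j v) i) ^ 2) =
     sumR n (fun i => (y i - Xmul p X b i) ^ 2) - 2 * u * sumR n (fun i => X i j * (y i - Xmul p X b i))
     + u ^ 2 * sumR n (fun i => X i j ^ 2)).
  { rewrite <- !sumR_scal, <- sumR_minus, <- sumR_plus. apply sumR_ext. intros i Hi.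
    rewrite Xmul_upd by auto. fold u. ring. }
  rewrite E, Hc. assert (HnR : 0 < INR n) by (apply lt_0_INR; lia).
  field. lra.
Qed.

Fixpoint cntN (m : nat) (f : nat -> bool) : nat :=
  match m with O => O | S k => (cntN k f + if f k then 1 else 0)%nat end.

Lemma cntN_ext m f g : (forall k, (k < m)%nat -> f k = g k) -> cntN m f = cntN m g.
Proof. induction m; intros H; simpl; auto. rewrite IHm by (intros; apply H; lia). rewrite H by lia. auto. Qed.

Lemma cntN_pos m f : (0 < cntN m f)%nat -> exists j, (j < m)%nat /\ f j = true.
Proof.
  induction m; simpl; intros H; [lia|].
  destruct (f m) eqn:E. exists m; split; auto.
  destruct IHm as [j [Hj Hf]]; [lia|]. exists j; split; auto.
Qed.

Lemma cntN_drop m f g j : (j < m)%nat -> f j = true -> g j = false ->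
  (forall k, (k < m)%nat -> k <> j -> f k = g k) -> cntN m f = S (cntN m g).
Proof.
  induction m; intros Hj Hf Hg H; [lia|]. simpl.
  destruct (Nat.eq_dec j m) as [->|Hne].
  - rewrite Hf, Hg. rewrite (cntN_ext m f g) by (intros; apply H; lia). lia.
  - rewrite (IHm ltac:(lia) Hf Hg) by (intros; apply H; lia).
  rewrite (H m) by lia. lia.
Qed.

Definition indb (bv : bool) : R := if bv then 1 else 0.


Lemma INR_cntN m f : INR (cntN m f) = sumR m (fun k => indb (f k)).
Proof. induction m; simpl; auto. rewrite plus_INR, IHm. unfold indb. destruct (f m); simpl; lra. Qed.

Lemma filter_len_seq (f : nat -> bool) st m :
  length (filter f (seq st m)) = cntN m (fun k => f (st + k)%nat).
Proof.
  induction m; [reflexivity|]. rewrite seq_S, filter_app, length_app, IHm. simpl.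
  destruct (f (st + m)%nat); simpl; lia.
Qed.

Definition nzb (x : R) : bool := if Req_EM_T x 0 then false else true.

Lemma norm0_cnt p v : norm0 p v = cntN p (fun k => nzb (v k)).
Proof. unfold norm0. rewrite filter_len_seq. apply cntN_ext. intros. reflexivity. Qed.


Lemma conc3 (pl : R -> R) x y z :
  (forall a b t, 0 <= a -> 0 <= b -> 0 <= t <= 1 -> t * pl a + (1 - t) * pl b <= pl (t * a + (1 - t) * b)) ->
  0 <= x -> x < y -> y < z -> (z - y) * pl x + (y - x) * pl z <= pl y * (z - x).
Proof.
  intros Hc Hx Hxy Hyz.
  set (t := (z - y) / (z - x)).
  assert (Ht : 0 <= t <= 1).
  { unfold t. split. apply Rmult_le_pos; [lra| left; apply Rinv_0_lt_compat; lra].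
    apply (Rmult_le_reg_r (z - x)); [lra|]. unfold Rdiv. rewrite Rmult_assoc, Rinv_l by lra. lra. }
  assert (Hy : t * x + (1 - t) * z = y). { unfold t. field. lra. }
  assert (H := Hc x z t Hx ltac:(lra) Ht). rewrite Hy in H.
  assert (E1 : (z - y) = t * (z - x)) by (unfold t; field; lra).
  assert (E2 : (y - x) = (1 - t) * (z - x)) by (unfold t; field; lra).
  rewrite E1, E2. nra.
Qed.

Lemma lip_beyond (pl dp : R -> R) a u v :
  (forall a b t, 0 <= a -> 0 <= b -> 0 <= t <= 1 -> t * pl a + (1 - t) * pl b <= pl (t * a + (1 - t) * b)) ->
  derivable_pt_lim pl a (dp a) -> 0 < a -> a <= u -> u <= v ->
  pl v - pl u <= dp a * (v - u).
Proof.
  intros Hc Hd Ha Hau Huv.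
  destruct (Req_dec u v) as [->|Hne]. lra.
  assert (Hlt : u < v) by lra.
  set (K := (pl v - pl a) / (v - a)).
  assert (H1 : pl v - pl u <= K * (v - u)).
  { destruct (Req_dec a u) as [<-|Hne2].
    - unfold K. right. field. lra.
    - assert (H := conc3 pl a u v Hc ltac:(lra) ltac:(lra) Hlt).
      unfold K. apply (Rmult_le_reg_r (v - a)); [lra|].
      replace ((pl v - pl a) / (v - a) * (v - u) * (v - a)) with ((pl v - pl a) * (v - u)) by (field; lra).
      nra. }
  assert (H2 : K <= dp a).
  { apply Rnot_lt_le. intros HK.
    destruct (Hd (K - dp a) ltac:(lra)) as [del Hdel].
    set (h := Rmin (del / 2) ((v - a) / 2)).
    assert (Hh0 : 0 < h) by (unfold h; apply Rmin_pos; [destruct del; simpl; lra|lra]).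
    assert (Hh1 : h <= del / 2) by apply Rmin_l.
    assert (Hh2 : h <= (v - a) / 2) by apply Rmin_r.
    assert (Hdel0 : 0 < del) by (destruct del; simpl; lra).
    specialize (Hdel h ltac:(lra) ltac:(rewrite Rabs_right; lra)).
    assert (H3 := conc3 pl a (a + h) v Hc ltac:(lra) ltac:(lra) ltac:(lra)).
    assert (Hs : K <= (pl (a + h) - pl a) / h).
    { unfold K. apply (Rmult_le_reg_r (v - a)); [lra|]. apply (Rmult_le_reg_r h); [lra|].
      replace ((pl v - pl a) / (v - a) * (v - a) * h) with ((pl v - pl a) * h) by (field; lra).
      replace ((pl (a + h) - pl a) / h * (v - a) * h) with ((pl (a + h) - pl a) * (v - a)) by (field; lra).
      replace (v - (a + h)) with (v - a - h) in H3 by ring. replace (a + h - a) with h in H3 by ring. nra. }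
    apply Rabs_def2 in Hdel. lra. }
  nra.
Qed.

Lemma pl_le_pinf (pl : R -> R) pinf a :
  (forall a b, 0 <= a -> a <= b -> pl a <= pl b) ->
  (forall e, 0 < e -> exists M, forall t, M <= t -> Rabs (pl t - pinf) < e) ->
  0 <= a -> pl a <= pinf.
Proof.
  intros Hi Hp Ha. apply Rnot_lt_le. intros H.
  destruct (Hp (pl a - pinf) ltac:(lra)) as [M HM].
  specialize (HM (Rmax M a) (Rmax_l _ _)).
  assert (pl a <= pl (Rmax M a)) by (apply Hi; [lra| apply Rmax_r]).
  apply Rabs_def2 in HM. lra.
Qed.


Lemma dpl_eq f x l l' : derivable_pt_lim f x l -> l = l' -> derivable_pt_lim f x l'.
Proof. intros H ->; exact H. Qed.

Lemma G_deriv (pl dp : R -> R) w x : derivable_pt_lim pl x (dp x) ->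
  derivable_pt_lim (fun x => / 2 * x ^ 2 - w * x + pl x) x (x - w + dp x).
Proof.
  intros H.
  apply dpl_eq with (l := (/ 2 * (INR 2 * x ^ (2 - 1)) - w * 1) + dp x).
  2: { simpl. field. }
  apply (derivable_pt_lim_plus (fun x => / 2 * x ^ 2 - w * x) pl); [|exact H].
  apply (derivable_pt_lim_minus (fun x => / 2 * x ^ 2) (fun x => w * x)).
  - apply (derivable_pt_lim_scal (fun x => x ^ 2)). apply derivable_pt_lim_pow.
  - apply (derivable_pt_lim_scal id). apply derivable_pt_lim_id.
Qed.

Lemma Gp_deriv (dp d2p : R -> R) w x : derivable_pt_lim dp x (d2p x) ->
  derivable_pt_lim (fun x => x - w + dp x) x (1 + d2p x).
Proof.
  intros H.
  apply dpl_eq with (l := (1 - 0) + d2p x). 2: ring.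
  apply (derivable_pt_lim_plus (fun x => x - w) dp); [|exact H].
  apply (derivable_pt_lim_minus id (fun _ => w)).
  - apply derivable_pt_lim_id.
  - apply derivable_pt_lim_const.
Qed.

Lemma Gp_mono (dp d2p : R -> R) A w t v :
  (forall x, 0 < x <= A -> derivable_pt_lim dp x (d2p x)) ->
  (forall a b, 0 < a -> a <= b -> b <= A -> - d2p b <= - d2p a) ->
  0 < t -> t < v -> v < A ->
  (v - w + dp v >= t - w + dp t -> A - w + dp A >= v - w + dp v) /\
  (v - w + dp v > t - w + dp t -> A - w + dp A > v - w + dp v).
Proof.
  intros Hd Hdec Ht Htv HvA.
  destruct (MVT_cor2 (fun x => x - w + dp x) (fun x => 1 + d2p x) t v Htv) as [c1 [E1 Hc1]].
  { intros c Hc. apply Gp_deriv. apply Hd. lra. }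
  destruct (MVT_cor2 (fun x => x - w + dp x) (fun x => 1 + d2p x) v A HvA) as [c2 [E2 Hc2]].
  { intros c Hc. apply Gp_deriv. apply Hd. lra. }
  simpl in E1, E2.
  assert (Hm : d2p c1 <= d2p c2) by (assert (H := Hdec c1 c2 ltac:(lra) ltac:(lra) ltac:(lra)); lra).
  split; intros H.
  - assert (0 <= 1 + d2p c1) by (apply Rnot_lt_le; intros Hn; nra). nra.
  - assert (0 < 1 + d2p c1) by (apply Rnot_ge_lt; intros Hn; nra). nra.
Qed.

Lemma G_lemma (pl dp d2p : R -> R) lam c1 w t :
  0 < lam -> 0 <= c1 < 1 ->
  (forall x, 0 < x -> derivable_pt_lim pl x (dp x)) ->
  (forall x, 0 < x <= (1 - c1) * lam -> derivable_pt_lim dp x (d2p x)) ->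
  (forall a b, 0 < a -> a <= b -> b <= (1 - c1) * lam -> - d2p b <= - d2p a) ->
  (forall x, 0 <= x <= lam -> pl x >= / 2 * (lam ^ 2 - (Rmax (lam - x) 0) ^ 2)) ->
  dp ((1 - c1) * lam) <= c1 * lam -> pl 0 = 0 ->
  0 < t < (1 - c1) * lam ->
  (forall x, 0 <= x -> / 2 * t ^ 2 - w * t + pl t <= / 2 * x ^ 2 - w * x + pl x) ->
  / 2 * 0 ^ 2 - w * 0 + pl 0 <= / 2 * t ^ 2 - w * t + pl t /\
  / 2 * ((1 - c1) * lam) ^ 2 - w * ((1 - c1) * lam) + pl ((1 - c1) * lam) <= / 2 * t ^ 2 - w * t + pl t.
Proof.
  intros Hlam Hc1 Hdp Hd2p Hdec Hlow Hdp1 Hpl0 Ht Hmin.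
  set (A := (1 - c1) * lam) in *.
  assert (HA : A <= lam) by (unfold A; nra).
  set (G := fun x => / 2 * x ^ 2 - w * x + pl x).
  assert (Hder0 : t - w + dp t = 0).
  { assert (pr : derivable_pt G t).
    { exists (t - w + dp t). apply G_deriv. apply Hdp. lra. }
    assert (E := deriv_minimum G 0 (2 * t) t pr ltac:(lra) ltac:(lra)).
    rewrite <- E. 2: { intros x Hx _. apply Hmin. lra. }
    symmetry. apply derive_pt_eq_0. apply G_deriv. apply Hdp. lra. }
  assert (Hlt : pl t >= / 2 * (lam ^ 2 - (Rmax (lam - t) 0) ^ 2)) by (apply Hlow; lra).
  rewrite Rmax_left in Hlt by lra.
  assert (HG0 := Hmin 0 ltac:(lra)). rewrite Hpl0 in HG0.
  assert (Hw : lam <= w) by nra.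
  assert (HGa : A - w + dp A <= 0) by (unfold A in *; nra).
  assert (Hneg : forall v, t < v < A -> v - w + dp v <= 0).
  { intros v Hv. apply Rnot_lt_le. intros Hpos.
    destruct (Gp_mono dp d2p A w t v Hd2p Hdec ltac:(lra) ltac:(lra) ltac:(lra)) as [_ H2].
    specialize (H2 ltac:(lra)). lra. }
  destruct (MVT_cor2 G (fun x => x - w + dp x) t A ltac:(lra)) as [c [Ec Hc]].
  { intros x Hx. apply G_deriv. apply Hdp. lra. }
  assert (HGA : G A <= G t) by (assert (H := Hneg c Hc); unfold G in *; nra).
  assert (Hweq : w = lam).
  { destruct (Req_dec w lam) as [|Hne]; auto. exfalso.
    assert (HGa' : A - w + dp A < 0) by (unfold A in *; nra).
    assert (Hneg' : c - w + dp c < 0).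
    { apply Rnot_le_lt. intros Hpos.
      destruct (Gp_mono dp d2p A w t c Hd2p Hdec ltac:(lra) ltac:(lra) ltac:(lra)) as [H1 _].
      specialize (H1 ltac:(lra)). lra. }
    assert (HGm := Hmin A ltac:(unfold A; nra)). unfold G in Ec. nra. }
  subst w. split; [|exact HGA]. rewrite Hpl0. nra.
Qed.


Definition sgn (x : R) : R := if Rlt_dec 0 x then 1 else -1.

Lemma coord_lemma n p X y lam0 (pl dp d2p : R -> R) lam c1 b j :
  (0 < n)%nat -> (j < p)%nat -> sumR n (fun i => X i j ^ 2) = INR n ->
  0 < lam -> 0 <= c1 < 1 ->
  (forall x, 0 < x -> derivable_pt_lim pl x (dp x)) ->
  (forall x, 0 < x <= (1 - c1) * lam -> derivable_pt_lim dp x (d2p x)) ->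
  (forall a b, 0 < a -> a <= b -> b <= (1 - c1) * lam -> - d2p b <= - d2p a) ->
  (forall x, 0 <= x <= lam -> pl x >= / 2 * (lam ^ 2 - (Rmax (lam - x) 0) ^ 2)) ->
  dp ((1 - c1) * lam) <= c1 * lam -> pl 0 = 0 ->
  (forall c, objL n p X y lam0 pl b <= objL n p X y lam0 pl c) ->
  0 < Rabs (b j) < (1 - c1) * lam ->
  objL n p X y lam0 pl (upd b j 0) = objL n p X y lam0 pl b /\
  objL n p X y lam0 pl (upd b j (sgn (b j) * ((1 - c1) * lam))) = objL n p X y lam0 pl b.
Proof.
  intros Hn Hj Hc Hlam Hc1 Hdp Hd2p Hdec Hlow Hdp1 Hpl0 Hmin Ht.
  set (Rn := sumR n (fun i => X i j * (y i - Xmul p X b i)) / INR n).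
  set (t := Rabs (b j)) in *.
  set (sg := sgn (b j)).
  assert (Hsg : sg * sg = 1 /\ b j = sg * t /\ forall x, 0 <= x -> Rabs (sg * x) = x).
  { unfold sg, sgn, t. destruct (Rlt_dec 0 (b j)).
    - rewrite Rabs_right by lra. split; [lra|split;[lra|]]. intros x Hx. rewrite Rabs_right; lra.
    - rewrite Rabs_left1 by lra. split; [lra|split;[lra|]]. intros x Hx. rewrite Rabs_left1; lra. }
  destruct Hsg as [Hs1 [Hbj Habs]].
  set (w := sg * Rn + t - lam0).
  assert (HPhi : forall x, 0 <= x ->
     objL n p X y lam0 pl (upd b j (sg * x)) - objL n p X y lam0 pl b =
     (/ 2 * x ^ 2 - w * x + pl x) - (/ 2 * t ^ 2 - w * t + pl t)).
  { intros x Hx. rewrite obj_upd by auto. fold Rn. rewrite (Habs x Hx). fold t.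
    unfold w. rewrite Hbj. assert (E : (sg * x - sg * t) ^ 2 = (x - t) ^ 2).
    { replace (sg * x - sg * t) with (sg * (x - t)) by ring. rewrite Rpow_mult_distr.
      replace (sg ^ 2) with (sg * sg) by ring. rewrite Hs1. ring. }
    rewrite E. unfold w. field. }
  assert (HG : forall x, 0 <= x -> / 2 * t ^ 2 - w * t + pl t <= / 2 * x ^ 2 - w * x + pl x).
  { intros x Hx. assert (H := Hmin (upd b j (sg * x))). assert (E := HPhi x Hx). lra. }
  destruct (G_lemma pl dp d2p lam c1 w t Hlam Hc1 Hdp Hd2p Hdec Hlow Hdp1 Hpl0 Ht HG) as [H0 HA].
  split.
  - assert (E := HPhi 0 ltac:(lra)). rewrite Rmult_0_r in E.
    assert (H := Hmin (upd b j 0)). lra.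
  - assert (HA0 : 0 <= (1 - c1) * lam) by nra.
    assert (E := HPhi _ HA0).
    assert (H := Hmin (upd b j (sg * ((1 - c1) * lam)))). lra.
Qed.


Lemma sumR_split2 s p f : (s <= p)%nat -> sumR p f = sumR s f + sumR (p - s) (fun k => f (s + k)%nat).
Proof. intros H. rewrite <- sumR_split. f_equal. lia. Qed.

Definition zb (x : R) : bool := if Req_EM_T x 0 then true else false.

Lemma norm1_0 s v : norm1_range 0 s v = sumR s (fun k => Rabs (v k)).
Proof. unfold norm1_range, sum_range. rewrite Nat.sub_0_r. reflexivity. Qed.

Lemma basic_ineq n p X y eps beta0 lam0 pl b :
  (0 < n)%nat ->
  (forall i, (i < n)%nat -> y i = Xmul p X beta0 i + eps i) ->
  (forall j, (j < p)%nat -> Rabs (/ INR n * XTmul n X eps j) <= lam0 / 2) ->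
  objL n p X y lam0 pl b <= objL n p X y lam0 pl beta0 ->
  / 2 * (/ INR n * sumR n (fun i => Xmul p X (fun k => b k - beta0 k) i ^ 2)) <=
  sumR p (fun k => lam0 / 2 * Rabs (b k - beta0 k) + lam0 * (Rabs (beta0 k) - Rabs (b k))
                   + (pl (Rabs (beta0 k)) - pl (Rabs (b k)))).
Proof.
  intros Hn Hmod HE Hob. unfold objL in Hob.
  set (d := fun k => b k - beta0 k).
  assert (HnR : 0 < INR n) by (apply lt_0_INR; lia).
  assert (E1 : sumR n (fun i => (y i - Xmul p X b i) ^ 2) =
     sumR n (fun i => eps i ^ 2) - 2 * sumR n (fun i => eps i * Xmul p X d i) + sumR n (fun i => Xmul p X d i ^ 2)).
  { rewrite <- sumR_scal, <- sumR_minus, <- sumR_plus. apply sumR_ext. intros i Hi.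
    unfold d. rewrite Xmul_sub. rewrite Hmod by auto. ring. }
  assert (E2 : sumR n (fun i => (y i - Xmul p X beta0 i) ^ 2) = sumR n (fun i => eps i ^ 2)).
  { apply sumR_ext. intros i Hi. rewrite Hmod by auto. ring. }
  assert (E3 : sumR n (fun i => eps i * Xmul p X d i) = sumR p (fun k => d k * XTmul n X eps k)).
  { unfold Xmul, XTmul. transitivity (sumR n (fun i => sumR p (fun k => d k * (X i k * eps i)))).
    - apply sumR_ext. intros i Hi. rewrite <- sumR_scal. apply sumR_ext. intros; ring.
    - rewrite sumR_swap. apply sumR_ext. intros k Hk. rewrite <- sumR_scal. apply sumR_ext. intros; ring. }
  assert (B3 : / INR n * sumR p (fun k => d k * XTmul n X eps k) <= sumR p (fun k => lam0 / 2 * Rabs (d k))).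
  { rewrite <- sumR_scal. apply sumR_le. intros k Hk. specialize (HE k Hk).
    replace (/ INR n * (d k * XTmul n X eps k)) with (d k * (/ INR n * XTmul n X eps k)) by ring.
    assert (H := Rle_abs (d k * (/ INR n * XTmul n X eps k))). rewrite Rabs_mult in H.
    assert (0 <= Rabs (d k)) by apply Rabs_pos. nra. }
  rewrite E1 in Hob. rewrite E2 in Hob. rewrite E3 in Hob.
  assert (ER : sumR p (fun k => lam0 / 2 * Rabs (b k - beta0 k) + lam0 * (Rabs (beta0 k) - Rabs (b k))
                   + (pl (Rabs (beta0 k)) - pl (Rabs (b k)))) =
     lam0 / 2 * sumR p (fun k => Rabs (d k)) + lam0 * (sumR p (fun k => Rabs (beta0 k)) - sumR p (fun k => Rabs (b k)))
     + (sumR p (fun k => pl (Rabs (beta0 k))) - sumR p (fun k => pl (Rabs (b k))))).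
  { rewrite <- !sumR_minus, <- !sumR_scal, <- !sumR_plus. apply sumR_ext. intros; unfold d; ring. }
  rewrite ER.
  set (SX := sumR n (fun i => Xmul p X d i ^ 2)) in *.
  set (EE := sumR n (fun i => eps i ^ 2)) in *.
  set (C := sumR p (fun k => d k * XTmul n X eps k)) in *.
  set (A1 := sumR p (fun k => Rabs (b k))) in *.
  set (A0 := sumR p (fun k => Rabs (beta0 k))) in *.
  set (P1 := sumR p (fun k => pl (Rabs (b k)))) in *.
  set (P0 := sumR p (fun k => pl (Rabs (beta0 k)))) in *.
  set (L := sumR p (fun k => Rabs (d k))) in *.
  rewrite sumR_scal in B3. fold L in B3.
  assert (Hinv : / (2 * INR n) = / 2 * / INR n) by (field; lra).
  rewrite Hinv in Hob.
  assert (H2 : / 2 * / INR n * (EE - 2 * C + SX) = / 2 * / INR n * EE - / INR n * C + / 2 * (/ INR n * SX)) by (field; lra).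
  rewrite H2 in Hob. lra.
Qed.

Lemma term_lo (pl dp : R -> R) lam0 a bk b0k :
  (forall a b t, 0 <= a -> 0 <= b -> 0 <= t <= 1 -> t * pl a + (1 - t) * pl b <= pl (t * a + (1 - t) * b)) ->
  (forall a b, 0 <= a -> a <= b -> pl a <= pl b) ->
  derivable_pt_lim pl a (dp a) -> 0 < a -> dp a <= lam0 / 4 -> 0 <= lam0 -> pl 0 = 0 ->
  Rabs b0k > a -> (bk = 0 \/ a <= Rabs bk) ->
  lam0 / 2 * Rabs (bk - b0k) + lam0 * (Rabs b0k - Rabs bk) + (pl (Rabs b0k) - pl (Rabs bk))
  <= 7 / 4 * lam0 * Rabs (bk - b0k) + pl a * indb (zb bk).
Proof.
  intros Hc Hi Hd Ha Hdp Hl0 Hp0 Hb0 Hbk.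
  unfold indb, zb. destruct (Req_EM_T bk 0) as [->|Hne].
  - rewrite Rabs_R0, Hp0. replace (0 - b0k) with (- b0k) by ring. rewrite Rabs_Ropp.
    assert (H := lip_beyond pl dp a a (Rabs b0k) Hc Hd Ha ltac:(lra) ltac:(lra)). nra.
  - destruct Hbk as [|Hbk]; [congruence|].
    assert (Htri : Rabs b0k - Rabs bk <= Rabs (bk - b0k)).
    { assert (H := Rabs_triang_inv b0k bk). rewrite Rabs_minus_sym in H. exact H. }
    assert (Htri2 : Rabs bk - Rabs b0k <= Rabs (bk - b0k)) by apply Rabs_triang_inv.
    assert (Hp : pl (Rabs b0k) - pl (Rabs bk) <= lam0 / 4 * Rabs (bk - b0k)).
    { destruct (Rle_dec (Rabs bk) (Rabs b0k)).
      - assert (H := lip_beyond pl dp a (Rabs bk) (Rabs b0k) Hc Hd Ha Hbk r). nra.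
      - assert (pl (Rabs b0k) <= pl (Rabs bk)) by (apply Hi; [apply Rabs_pos|lra]).
        assert (0 <= Rabs (bk - b0k)) by apply Rabs_pos. nra. }
    nra.
Qed.

Lemma term_hi (pl : R -> R) lam0 a bk :
  (forall a b, 0 <= a -> a <= b -> pl a <= pl b) -> 0 <= a -> pl 0 = 0 ->
  (bk = 0 \/ a <= Rabs bk) ->
  lam0 / 2 * Rabs (bk - 0) + lam0 * (Rabs 0 - Rabs bk) + (pl (Rabs 0) - pl (Rabs bk))
  <= - (lam0 / 2) * Rabs (bk - 0) - pl a * indb (nzb bk).
Proof.
  intros Hi Ha Hp0 Hbk. rewrite Rminus_0_r, Rabs_R0, Hp0.
  unfold indb, nzb. destruct (Req_EM_T bk 0) as [->|Hne].
  - rewrite Rabs_R0, Hp0. lra.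
  - destruct Hbk as [|Hbk]; [congruence|].
    assert (pl a <= pl (Rabs bk)) by (apply Hi; lra). lra.
Qed.

Lemma RE_apply n p s X kappa0 (d : nat -> R) :
  (0 < n)%nat -> 0 < kappa0 ->
  (forall d : nat -> R, sqrt (sumR p (fun j => d j ^ 2)) = 1 -> (norm0 p d < 2 * s)%nat ->
           kappa0 <= / sqrt (INR n) * sqrt (sumR n (fun i => Xmul p X d i ^ 2))) ->
  0 < sumR p (fun k => d k ^ 2) -> (norm0 p d < 2 * s)%nat ->
  kappa0 ^ 2 * sumR p (fun k => d k ^ 2) <= / INR n * sumR n (fun i => Xmul p X d i ^ 2).
Proof.
  intros Hn Hk HRE HQ H0.
  set (Q := sumR p (fun k => d k ^ 2)) in *.
  set (r := sqrt Q).
  assert (Hr : 0 < r) by (apply sqrt_lt_R0; auto).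
  assert (Hrr : r * r = Q) by (apply sqrt_sqrt; lra).
  set (e := fun k => d k / r).
  assert (He1 : sumR p (fun j => e j ^ 2) = 1).
  { unfold e. transitivity (/ Q * sumR p (fun k => d k ^ 2)). 2: (fold Q; field; lra). rewrite <- sumR_scal.
    apply sumR_ext. intros. rewrite <- Hrr. field. lra. }
  assert (Hnz : norm0 p e = norm0 p d).
  { rewrite !norm0_cnt. apply cntN_ext. intros k Hkp. unfold nzb, e.
    destruct (Req_EM_T (d k / r) 0), (Req_EM_T (d k) 0); auto.
    - exfalso. apply n0. apply (Rmult_eq_reg_r (/ r)). rewrite Rmult_0_l. exact e0. apply Rinv_neq_0_compat; lra.
    - exfalso. apply n0. rewrite e0. unfold Rdiv. ring. }
  assert (HX : sumR n (fun i => Xmul p X e i ^ 2) = / Q * sumR n (fun i => Xmul p X d i ^ 2)).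
  { rewrite <- sumR_scal. apply sumR_ext. intros i Hi.
    assert (Xmul p X e i = Xmul p X d i / r).
    { unfold Xmul, e. unfold Rdiv. rewrite <- (Rmult_comm (/ r)), <- sumR_scal. apply sumR_ext. intros; ring. }
    rewrite H. rewrite <- Hrr. field. lra. }
  specialize (HRE e ltac:(rewrite He1; apply sqrt_1) ltac:(rewrite Hnz; auto)).
  rewrite HX in HRE.
  set (SX := sumR n (fun i => Xmul p X d i ^ 2)) in *.
  assert (HSX : 0 <= SX) by (apply sumR_nonneg; intros; apply pow2_ge_0).
  assert (HnR : 0 < INR n) by (apply lt_0_INR; lia).
  rewrite sqrt_mult_alt in HRE by (left; apply Rinv_0_lt_compat; lra).
  rewrite sqrt_inv in HRE. fold r in HRE.
  assert (Hsn : 0 < sqrt (INR n)) by (apply sqrt_lt_R0; auto).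
  assert (Hsn2 := sqrt_sqrt (INR n) ltac:(lra)).
  assert (HsX := sqrt_sqrt SX HSX). assert (0 <= sqrt SX) by apply sqrt_pos.
  assert (H1 : kappa0 * (sqrt (INR n) * r) <= sqrt SX).
  { replace (sqrt SX) with ((/ sqrt (INR n) * (/ r * sqrt SX)) * (sqrt (INR n) * r)) by (field; lra).
    apply Rmult_le_compat_r; [nra|exact HRE]. }
  assert (H2 : (kappa0 * (sqrt (INR n) * r)) ^ 2 <= sqrt SX ^ 2).
  { apply pow_incr. split; [|exact H1]. apply Rmult_le_pos; [lra|nra]. }
  replace ((kappa0 * (sqrt (INR n) * r)) ^ 2) with (kappa0 ^ 2 * (sqrt (INR n) * sqrt (INR n)) * (r * r)) in H2 by ring.
  rewrite Hsn2, Hrr in H2. replace (sqrt SX ^ 2) with (sqrt SX * sqrt SX) in H2 by ring. rewrite HsX in H2.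
  apply (Rmult_le_reg_l (INR n)); [lra|]. replace (INR n * (/ INR n * SX)) with SX by (field; lra). nra.
Qed.

Lemma sumR_const1 m : sumR m (fun _ => 1) = INR m.
Proof. induction m; simpl; auto. rewrite IHm. destruct m; simpl; lra. Qed.

Lemma sumR_ge_term m f k : (forall j, (j < m)%nat -> 0 <= f j) -> (k < m)%nat -> f k <= sumR m f.
Proof.
  induction m; intros H Hk; [lia|]. simpl.
  destruct (Nat.eq_dec k m) as [->|Hne].
  - assert (0 <= sumR m f) by (apply sumR_nonneg; intros; apply H; lia). lra.
  - assert (f k <= sumR m f) by (apply IHm; [intros; apply H; lia|lia]). assert (0 <= f m) by (apply H; lia). lra.
Qed.

Lemma indb_le1 bv : 0 <= indb bv <= 1.
Proof. unfold indb; destruct bv; lra. Qed.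

Lemma sumR_indb_le m f : sumR m (fun k => indb (f k)) <= INR m.
Proof. rewrite <- sumR_const1. apply sumR_le. intros. apply indb_le1. Qed.

Lemma sumR_indb_nonneg m f : 0 <= sumR m (fun k => indb (f k)).
Proof. apply sumR_nonneg. intros. apply indb_le1. Qed.

Lemma sumR_indb_pos m f : 0 < sumR m (fun k => indb (f k)) -> exists k, (k < m)%nat /\ f k = true.
Proof. intros H. rewrite <- INR_cntN in H. apply cntN_pos. apply INR_lt. simpl. lra. Qed.

Lemma base_case n p s X y eps beta0 lam lam0 c1 kappa0 pinf (pl dp : R -> R) b :
  (0 < n)%nat -> (s <= p)%nat ->
  (forall i, (i < n)%nat -> y i = Xmul p X beta0 i + eps i) ->
  (forall j, (s <= j < p)%nat -> beta0 j = 0) ->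
  0 <= lam0 -> 0 < lam -> 0 <= c1 < 1 ->
  pl 0 = 0 -> (forall t, 0 <= t -> 0 <= pl t) ->
  (forall e, 0 < e -> exists M, forall t, M <= t -> Rabs (pl t - pinf) < e) ->
  (forall t, 0 < t -> derivable_pt_lim pl t (dp t)) ->
  0 < kappa0 ->
  (forall d : nat -> R, sqrt (sumR p (fun j => d j ^ 2)) = 1 -> (norm0 p d < 2 * s)%nat ->
           kappa0 <= / sqrt (INR n) * sqrt (sumR n (fun i => Xmul p X d i ^ 2))) ->
  (forall a b, 0 <= a -> a <= b -> pl a <= pl b) ->
  (forall a b t, 0 <= a -> 0 <= b -> 0 <= t <= 1 -> t * pl a + (1 - t) * pl b <= pl (t * a + (1 - t) * b)) ->
  dp ((1 - c1) * lam) <= lam0 / 4 ->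
  (forall j, (j < s)%nat -> Rabs (beta0 j) > Rmax ((1 - c1) * lam) (2 * / kappa0 * sqrt pinf)) ->
  (forall j, (j < p)%nat -> Rabs (/ INR n * XTmul n X eps j) <= lam0 / 2) ->
  (forall c, objL n p X y lam0 pl b <= objL n p X y lam0 pl c) ->
  (forall j, (j < p)%nat -> b j = 0 \/ (1 - c1) * lam <= Rabs (b j)) ->
  / INR n * sumR n (fun i => Xmul p X (fun k => b k - beta0 k) i ^ 2)
    + lam0 * norm1_range s p (fun k => b k - beta0 k)
  <= 7 * lam0 * norm1_range 0 s (fun k => b k - beta0 k).
Proof.
  intros Hn Hsp Hmod Hs2 Hl0 Hlam Hc1 Hp0 Hpnn Hpinf Hdp Hk0 HRE Hinc Hconc Hdp2 Hbmin HE Hmin Hthr.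
  set (a := (1 - c1) * lam) in *.
  assert (Ha : 0 < a) by (unfold a; nra).
  set (d := fun k => b k - beta0 k).
  assert (BI := basic_ineq n p X y eps beta0 lam0 pl b Hn Hmod HE (Hmin beta0)).
  set (pa := pl a).
  assert (Hpa : 0 <= pa) by (apply Hpnn; lra).
  assert (Hpapi : pa <= pinf) by (apply (pl_le_pinf pl pinf a Hinc Hpinf); lra).
  set (bd := fun k => if lt_dec k s then 7 / 4 * lam0 * Rabs (d k) + pa * indb (zb (b k))
                      else - (lam0 / 2) * Rabs (d k) - pa * indb (nzb (b k))).
  assert (HB : sumR p (fun k => lam0 / 2 * Rabs (b k - beta0 k) + lam0 * (Rabs (beta0 k) - Rabs (b k))
                   + (pl (Rabs (beta0 k)) - pl (Rabs (b k)))) <= sumR p bd).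
  { apply sumR_le. intros k Hk. unfold bd, d. destruct (lt_dec k s) as [Hks|Hks].
    - apply (term_lo pl dp lam0 a (b k) (beta0 k) Hconc Hinc (Hdp a Ha) Ha Hdp2 Hl0 Hp0).
      + assert (H := Hbmin k Hks). assert (H2 := Rmax_l a (2 * / kappa0 * sqrt pinf)). fold a in H. lra.
      + apply Hthr; auto.
    - rewrite (Hs2 k) by lia. apply (term_hi pl lam0 a (b k) Hinc ltac:(lra) Hp0). apply Hthr; auto. }
  set (N1 := sumR s (fun k => Rabs (d k))).
  set (N2 := sumR (p - s) (fun k => Rabs (d (s + k)%nat))).
  set (K1 := sumR s (fun k => indb (zb (b k)))).
  set (K2 := sumR (p - s) (fun k => indb (nzb (b (s + k)%nat)))).
  assert (Hbd : sumR p bd = 7 / 4 * lam0 * N1 + pa * K1 - (lam0 / 2) * N2 - pa * K2).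
  { rewrite (sumR_split2 s p bd Hsp).
    assert (E1 : sumR s bd = 7 / 4 * lam0 * N1 + pa * K1).
    { unfold N1, K1. rewrite <- !sumR_scal, <- sumR_plus. apply sumR_ext. intros k Hk. unfold bd.
      destruct (lt_dec k s); [ring|lia]. }
    assert (E2 : sumR (p - s) (fun k => bd (s + k)%nat) = - (lam0 / 2) * N2 - pa * K2).
    { unfold N2, K2. rewrite <- !sumR_scal, <- sumR_minus. apply sumR_ext. intros k Hk. unfold bd.
      destruct (lt_dec (s + k) s); [lia|ring]. }
    rewrite E1, E2. ring. }
  set (SX := sumR n (fun i => Xmul p X d i ^ 2)) in *.
  assert (HN2 : 0 <= N2) by (apply sumR_nonneg; intros; apply Rabs_pos).
  assert (HK2 : 0 <= K2) by apply sumR_indb_nonneg.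
  assert (HSX : 0 <= SX) by (apply sumR_nonneg; intros; apply pow2_ge_0).
  assert (HnR : 0 < INR n) by (apply lt_0_INR; lia).
  assert (HD : 0 <= / INR n * SX) by (apply Rmult_le_pos; [left; apply Rinv_0_lt_compat|]; lra).
  assert (Hkey : pa * (K1 - K2) <= / 4 * (/ INR n * SX)).
  { destruct (Rle_dec K1 K2) as [Hle|Hgt].
    - nra.
    - assert (Hgt' : K2 < K1) by lra.
      assert (Hs1 : pa * K1 <= kappa0 ^ 2 / 4 * sumR s (fun k => d k ^ 2)).
      { unfold K1. rewrite <- !sumR_scal. apply sumR_le. intros k Hk. unfold indb, zb.
        destruct (Req_EM_T (b k) 0) as [Hz|Hz].
        - unfold d. rewrite Hz. replace ((0 - beta0 k) ^ 2) with (Rabs (beta0 k) ^ 2) by (rewrite <- Rsqr_pow2, <- Rsqr_abs; unfold Rsqr; ring).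
          assert (H := Hbmin k Hk). assert (H2 := Rmax_r a (2 * / kappa0 * sqrt pinf)).
          assert (Hq := sqrt_sqrt pinf ltac:(lra)). assert (Hq0 : 0 <= sqrt pinf) by apply sqrt_pos.
          set (q := sqrt pinf) in *. set (B := Rabs (beta0 k)) in *.
          assert (HB2 : kappa0 * B > 2 * q).
          { assert (E : 2 * / kappa0 * q * kappa0 = 2 * q) by (field; lra).
            assert (B > 2 * / kappa0 * q) by lra. nra. }
          nra.
        - assert (0 <= d k ^ 2) by apply pow2_ge_0. nra. }
      assert (HQs : sumR s (fun k => d k ^ 2) <= sumR p (fun k => d k ^ 2)).
      { rewrite (sumR_split2 s p _ Hsp). assert (0 <= sumR (p - s) (fun k => d (s + k)%nat ^ 2)) by (apply sumR_nonneg; intros; apply pow2_ge_0). lra. }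
      assert (HK1 : 0 < K1) by lra.
      destruct (sumR_indb_pos s _ HK1) as [k0 [Hk0s Hk0z]].
      assert (Hd0 : 0 < d k0 ^ 2).
      { unfold zb in Hk0z. destruct (Req_EM_T (b k0) 0) as [Hz|]; [|discriminate].
        unfold d. rewrite Hz. assert (H := Hbmin k0 Hk0s). assert (H2 := Rmax_l a (2 * / kappa0 * sqrt pinf)).
        replace ((0 - beta0 k0) ^ 2) with (Rabs (beta0 k0) ^ 2) by (rewrite <- Rsqr_pow2, <- Rsqr_abs; unfold Rsqr; ring).
        nra. }
      assert (HQ : 0 < sumR p (fun k => d k ^ 2)).
      { assert (H := sumR_ge_term p (fun k => d k ^ 2) k0 ltac:(intros; apply pow2_ge_0) (Nat.lt_le_trans _ _ _ Hk0s Hsp)). cbv beta in H. lra. }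
      assert (Hn0 : (norm0 p d < 2 * s)%nat).
      { apply INR_lt. rewrite norm0_cnt, INR_cntN, (sumR_split2 s p _ Hsp).
        assert (E : sumR (p - s) (fun k => indb (nzb (d (s + k)%nat))) = K2).
        { unfold K2. apply sumR_ext. intros k Hk. unfold d. rewrite (Hs2 (s + k)%nat) by lia. rewrite Rminus_0_r. auto. }
        rewrite E. assert (H1 := sumR_indb_le s (fun k => nzb (d k))). assert (H2 := sumR_indb_le s (fun k => zb (b k))).
        cbv beta in H2. fold K1 in H2. rewrite mult_INR. replace (INR 2) with 2 by (simpl; lra). lra. }
      assert (HRE' := RE_apply n p s X kappa0 d Hn Hk0 HRE HQ Hn0). fold SX in HRE'.
      nra. }
  assert (HN1 : norm1_range 0 s d = N1) by (rewrite norm1_0; reflexivity).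
  assert (HN2' : norm1_range s p d = N2) by reflexivity.
  rewrite HN1, HN2'. fold d in BI. fold SX in BI. nra.
Qed.


Definition Fval n p s X (beta0 : nat -> R) lam0 (b : nat -> R) : R :=
  / INR n * sumR n (fun i => Xmul p X (fun k => b k - beta0 k) i ^ 2)
  + lam0 * norm1_range s p (fun k => b k - beta0 k) - 7 * lam0 * norm1_range 0 s (fun k => b k - beta0 k).

Lemma Fval_convex n p s X beta0 lam0 b b0 ba th :
  (0 < n)%nat -> 0 <= lam0 -> 0 <= th <= 1 ->
  (forall k, b k - beta0 k = (1 - th) * (b0 k - beta0 k) + th * (ba k - beta0 k)) ->
  (forall k, (k < s)%nat -> 0 <= (b0 k - beta0 k) * (ba k - beta0 k)) ->
  Fval n p s X beta0 lam0 b <= (1 - th) * Fval n p s X beta0 lam0 b0 + th * Fval n p s X beta0 lam0 ba.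
Proof.
  intros Hn Hl Hth Hcomb Hprod.
  set (u := fun k => b0 k - beta0 k). set (v := fun k => ba k - beta0 k).
  assert (Ew : (fun k => b k - beta0 k) = (fun k => (1 - th) * u k + th * v k)).
  { apply functional_extensionality. intros k. apply Hcomb. }
  unfold Fval. rewrite Ew. fold u v.
  assert (HnR : 0 < INR n) by (apply lt_0_INR; lia).
  assert (HS : sumR n (fun i => Xmul p X (fun k => (1 - th) * u k + th * v k) i ^ 2)
     <= (1 - th) * sumR n (fun i => Xmul p X u i ^ 2) + th * sumR n (fun i => Xmul p X v i ^ 2)).
  { rewrite <- !sumR_scal, <- sumR_plus. apply sumR_le. intros i Hi. rewrite Xmul_comb.
    set (A := Xmul p X u i). set (B := Xmul p X v i).
    assert (0 <= th * (1 - th) * (A - B) ^ 2) by (apply Rmult_le_pos; [nra|apply pow2_ge_0]). nra. }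
  assert (H2 : norm1_range s p (fun k => (1 - th) * u k + th * v k)
     <= (1 - th) * norm1_range s p u + th * norm1_range s p v).
  { unfold norm1_range, sum_range. rewrite <- !sumR_scal, <- sumR_plus. apply sumR_le. intros k Hk.
    eapply Rle_trans. apply Rabs_triang. rewrite !Rabs_mult, (Rabs_right (1 - th)), (Rabs_right th) by lra. lra. }
  assert (H1 : norm1_range 0 s (fun k => (1 - th) * u k + th * v k)
     = (1 - th) * norm1_range 0 s u + th * norm1_range 0 s v).
  { rewrite !norm1_0. rewrite <- !sumR_scal, <- sumR_plus. apply sumR_ext. intros k Hk.
    specialize (Hprod k Hk). change (b0 k - beta0 k) with (u k) in Hprod. change (ba k - beta0 k) with (v k) in Hprod.
    set (x := u k) in *. set (z := v k) in *.
    assert (Ha : 0 <= 1 - th) by lra. destruct Hth as [Hth0 Hth1].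
    clearbody x z.
    destruct (Rle_dec 0 x) as [Hx|Hx]; destruct (Rle_dec 0 z) as [Hz|Hz];
      try apply Rnot_le_lt in Hx; try apply Rnot_le_lt in Hz.
    - assert (0 <= (1 - th) * x + th * z) by (apply Rplus_le_le_0_compat; apply Rmult_le_pos; lra).
      rewrite !Rabs_right by lra. ring.
    - assert (x = 0) by (apply Rle_antisym; [apply Rnot_lt_le; intro; nra|lra]). subst x. rewrite Rabs_R0.
      assert ((1 - th) * 0 + th * z <= 0) by nra. rewrite !Rabs_left1 by lra. ring.
    - assert (z = 0) by (apply Rle_antisym; [apply Rnot_lt_le; intro; nra|lra]). subst z. rewrite Rabs_R0.
      assert ((1 - th) * x + th * 0 <= 0) by nra. rewrite !Rabs_left1 by lra. ring.
    - assert ((1 - th) * x + th * z <= 0) by nra. rewrite !Rabs_left1 by lra. ring. }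
  rewrite H1.
  assert (/ INR n * sumR n (fun i => Xmul p X (fun k => (1 - th) * u k + th * v k) i ^ 2)
     <= / INR n * ((1 - th) * sumR n (fun i => Xmul p X u i ^ 2) + th * sumR n (fun i => Xmul p X v i ^ 2))).
  { apply Rmult_le_compat_l; [left; apply Rinv_0_lt_compat; lra| exact HS]. }
  nra.
Qed.

Definition smallb (a x : R) : bool :=
  if Rlt_dec 0 (Rabs x) then (if Rlt_dec (Rabs x) a then true else false) else false.

Lemma cntN_ge1 m f j : (j < m)%nat -> f j = true -> (1 <= cntN m f)%nat.
Proof.
  induction m; intros Hj Hf; [lia|]. simpl. destruct (Nat.eq_dec j m) as [->|Hne].
  - rewrite Hf. lia.
  - specialize (IHm ltac:(lia) Hf). lia.
Qed.


Lemma all_minimizers n p s X y eps beta0 lam lam0 c1 kappa0 pinf (pl dp d2p : R -> R) :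
  (0 < n)%nat -> (s <= p)%nat ->
  (forall j, (j < p)%nat -> sumR n (fun i => X i j ^ 2) = INR n) ->
  (forall i, (i < n)%nat -> y i = Xmul p X beta0 i + eps i) ->
  (forall j, (s <= j < p)%nat -> beta0 j = 0) ->
  0 <= lam0 -> 0 < lam -> 0 <= c1 < 1 ->
  pl 0 = 0 -> (forall t, 0 <= t -> 0 <= pl t) ->
  (forall e, 0 < e -> exists M, forall t, M <= t -> Rabs (pl t - pinf) < e) ->
  (forall t, 0 < t -> derivable_pt_lim pl t (dp t)) ->
  0 < kappa0 ->
  (forall d : nat -> R, sqrt (sumR p (fun j => d j ^ 2)) = 1 -> (norm0 p d < 2 * s)%nat ->
           kappa0 <= / sqrt (INR n) * sqrt (sumR n (fun i => Xmul p X d i ^ 2))) ->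
  (forall a b, 0 <= a -> a <= b -> pl a <= pl b) ->
  (forall a b t, 0 <= a -> 0 <= b -> 0 <= t <= 1 -> t * pl a + (1 - t) * pl b <= pl (t * a + (1 - t) * b)) ->
  (forall t, 0 <= t <= lam -> pl t >= / 2 * (lam ^ 2 - (Rmax (lam - t) 0) ^ 2)) ->
  dp ((1 - c1) * lam) <= c1 * lam ->
  (forall t, 0 < t <= (1 - c1) * lam -> derivable_pt_lim dp t (d2p t)) ->
  (forall a b, 0 < a -> a <= b -> b <= (1 - c1) * lam -> - d2p b <= - d2p a) ->
  dp ((1 - c1) * lam) <= lam0 / 4 ->
  (forall j, (j < s)%nat -> Rabs (beta0 j) > Rmax ((1 - c1) * lam) (2 * / kappa0 * sqrt pinf)) ->
  (forall j, (j < p)%nat -> Rabs (/ INR n * XTmul n X eps j) <= lam0 / 2) ->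
  forall N b, (cntN p (fun k => smallb ((1 - c1) * lam) (b k)) <= N)%nat ->
  (forall c, objL n p X y lam0 pl b <= objL n p X y lam0 pl c) ->
  Fval n p s X beta0 lam0 b <= 0.
Proof.
  intros Hn Hsp Hcol Hmod Hs2 Hl0 Hlam Hc1 Hp0 Hpnn Hpinf Hdp Hk0 HRE Hinc Hconc Hlow Hdp1 Hd2p Hdec Hdp2 Hbmin HE.
  set (a := (1 - c1) * lam) in *.
  assert (Ha : 0 < a) by (unfold a; nra).
  induction N; intros b Hcnt Hmin.
  - assert (Hthr : forall j, (j < p)%nat -> b j = 0 \/ a <= Rabs (b j)).
    { intros j Hj. destruct (Req_dec (b j) 0) as [|Hne]; [left; auto|right].
      apply Rnot_lt_le. intros Hlt.
      assert (Hs : smallb a (b j) = true).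
      { unfold smallb. destruct (Rlt_dec 0 (Rabs (b j))) as [|Hn0].
        - destruct (Rlt_dec (Rabs (b j)) a); [auto|contradiction].
        - exfalso. apply Hn0. apply Rabs_pos_lt. auto. }
      assert (H := cntN_ge1 p (fun k => smallb a (b k)) j Hj Hs). lia. }
    assert (H := base_case n p s X y eps beta0 lam lam0 c1 kappa0 pinf pl dp b Hn Hsp Hmod Hs2 Hl0 Hlam Hc1
      Hp0 Hpnn Hpinf Hdp Hk0 HRE Hinc Hconc Hdp2 Hbmin HE Hmin Hthr).
    unfold Fval. lra.
  - destruct (le_lt_dec (cntN p (fun k => smallb a (b k))) N) as [Hle|Hgt].
    { apply IHN; auto. }
    assert (Hpos : (0 < cntN p (fun k => smallb a (b k)))%nat) by lia.
    destruct (cntN_pos _ _ Hpos) as [j [Hj Hsj]].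
    assert (Ht : 0 < Rabs (b j) < a).
    { unfold smallb in Hsj. destruct (Rlt_dec 0 (Rabs (b j))); [|discriminate].
      destruct (Rlt_dec (Rabs (b j)) a); [lra|discriminate]. }
    destruct (coord_lemma n p X y lam0 pl dp d2p lam c1 b j Hn Hj (Hcol j Hj) Hlam Hc1 Hdp Hd2p Hdec Hlow Hdp1 Hp0 Hmin Ht)
      as [E0 Ea].
    set (sg := sgn (b j)) in *.
    assert (Hsg : (sg = 1 \/ sg = -1) /\ b j = sg * Rabs (b j)).
    { unfold sg, sgn. destruct (Rlt_dec 0 (b j)).
      - rewrite Rabs_right by lra. split; [left|]; lra.
      - rewrite Rabs_left1 by lra. split; [right|]; lra. }
    set (b0 := upd b j 0). set (ba := upd b j (sg * a)).
    assert (Hm0 : forall c, objL n p X y lam0 pl b0 <= objL n p X y lam0 pl c) by (intros; unfold b0; rewrite E0; auto).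
    assert (Hma : forall c, objL n p X y lam0 pl ba <= objL n p X y lam0 pl c) by (intros; unfold ba, a; rewrite Ea; auto).
    assert (Hc0 : cntN p (fun k => smallb a (b k)) = S (cntN p (fun k => smallb a (b0 k)))).
    { apply (cntN_drop p _ _ j Hj Hsj).
      - unfold b0, upd. destruct (Nat.eq_dec j j); [|congruence]. unfold smallb. rewrite Rabs_R0.
        destruct (Rlt_dec 0 0); [lra|auto].
      - intros k Hk Hne. unfold b0, upd. destruct (Nat.eq_dec k j); [congruence|auto]. }
    assert (Hca : cntN p (fun k => smallb a (b k)) = S (cntN p (fun k => smallb a (ba k)))).
    { apply (cntN_drop p _ _ j Hj Hsj).
      - unfold ba, upd. destruct (Nat.eq_dec j j); [|congruence]. unfold smallb.
        assert (Hs1 : Rabs sg = 1) by (destruct Hsg as [[H|H] _]; rewrite H; unfold Rabs; destruct Rcase_abs; lra).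
        assert (Rabs (sg * a) = a) by (rewrite Rabs_mult, Hs1, (Rabs_right a); lra).
        rewrite H. destruct (Rlt_dec 0 a); [|auto]. destruct (Rlt_dec a a); [lra|auto].
      - intros k Hk Hne. unfold ba, upd. destruct (Nat.eq_dec k j); [congruence|auto]. }
    assert (F0 := IHN b0 ltac:(lia) Hm0).
    assert (Fa := IHN ba ltac:(lia) Hma).
    set (th := Rabs (b j) / a).
    assert (Hth : 0 <= th <= 1).
    { unfold th. split. apply Rmult_le_pos; [lra|left; apply Rinv_0_lt_compat; lra].
      apply (Rmult_le_reg_r a); [lra|]. unfold Rdiv. rewrite Rmult_assoc, Rinv_l by lra. lra. }
    assert (Hconv := Fval_convex n p s X beta0 lam0 b b0 ba th Hn Hl0 Hth).
    assert (Hle : Fval n p s X beta0 lam0 b <= (1 - th) * Fval n p s X beta0 lam0 b0 + th * Fval n p s X beta0 lam0 ba).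
    { apply Hconv.
      - intros k. unfold b0, ba, upd. destruct (Nat.eq_dec k j) as [->|]; [|ring].
        destruct Hsg as [_ Hbj]. rewrite Hbj at 1. unfold th. field. lra.
      - intros k Hk. unfold b0, ba, upd. destruct (Nat.eq_dec k j) as [->|]; [|apply Rle_0_sqr].
        assert (H := Hbmin j Hk). assert (H2 := Rmax_l a (2 * / kappa0 * sqrt pinf)). fold a in H.
        destruct Hsg as [[-> | ->] _].
        + destruct (Rle_dec 0 (beta0 j)).
          * rewrite Rabs_right in H by lra. nra.
          * rewrite Rabs_left in H by lra. nra.
        + destruct (Rle_dec 0 (beta0 j)).
          * rewrite Rabs_right in H by lra. nra.
          * rewrite Rabs_left in H by lra. nra. }
    nra.
Qed.


Definition sumL (f : nat -> R) (l : list nat) : R := fold_right (fun j acc => f j + acc) 0 l.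

Lemma sumL_app f l1 l2 : sumL f (l1 ++ l2) = sumL f l1 + sumL f l2.
Proof. induction l1; simpl; [lra|]. unfold sumL in *. simpl. rewrite IHl1. lra. Qed.

Lemma sumL_perm f l1 l2 : Permutation l1 l2 -> sumL f l1 = sumL f l2.
Proof. intros H. induction H; unfold sumL in *; simpl; lra. Qed.

Lemma sumL_filter f (g : nat -> bool) l : sumL f l = sumL f (filter g l) + sumL f (filter (fun x => negb (g x)) l).
Proof. induction l; simpl; [unfold sumL; simpl; lra|]. destruct (g a); simpl; unfold sumL in *; simpl; lra. Qed.

Lemma sumL_le f g l : (forall x, In x l -> f x <= g x) -> sumL f l <= sumL g l.
Proof. induction l; intros H; unfold sumL in *; simpl; [lra|]. assert (f a <= g a) by (apply H; left; auto).
  assert (fold_right (fun j acc => f j + acc) 0 l <= fold_right (fun j acc => g j + acc) 0 l) by (apply IHl; intros; apply H; right; auto). lra. Qed.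

Lemma sumL_nonneg f l : (forall x, In x l -> 0 <= f x) -> 0 <= sumL f l.
Proof. induction l; intros H; unfold sumL in *; simpl; [lra|]. assert (0 <= f a) by (apply H; left; auto).
  assert (0 <= fold_right (fun j acc => f j + acc) 0 l) by (apply IHl; intros; apply H; right; auto). lra. Qed.

Lemma sumL_const c l : sumL (fun _ => c) l = INR (length l) * c.
Proof. induction l; unfold sumL in *; simpl; [lra|]. rewrite IHl. destruct (length l); simpl; lra. Qed.

Lemma sumL_scal c f l : sumL (fun x => c * f x) l = c * sumL f l.
Proof. induction l; unfold sumL in *; simpl; [lra|]. rewrite IHl. lra. Qed.

Lemma sumR_seq f st m : sumR m (fun k => f (st + k)%nat) = sumL f (seq st m).
Proof. induction m; [reflexivity|]. rewrite seq_S, sumL_app. simpl. rewrite IHm. unfold sumL; simpl. lra. Qed.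

Lemma list_max_ex (g : nat -> R) l : l <> [] -> exists k, In k l /\ forall x, In x l -> g x <= g k.
Proof.
  induction l as [|a l IH]; intros H; [congruence|].
  destruct l as [|b l'].
  - exists a. split; [left; auto|]. intros x [->|[]]. lra.
  - destruct (IH ltac:(discriminate)) as [k [Hk Hmax]].
    destruct (Rle_dec (g a) (g k)).
    + exists k. split; [right; auto|]. intros x [->|Hx]; [lra|auto].
    + exists a. split; [left; auto|]. intros x [->|Hx]; [lra|]. specialize (Hmax x Hx). lra.
Qed.

Definition memb (S : list nat) (x : nat) : bool := if in_dec Nat.eq_dec x S then true else false.

Lemma top_exists (g : nat -> R) l m : NoDup l -> (m <= length l)%nat ->
  exists S, NoDup S /\ length S = m /\ (forall j, In j S -> In j l) /\
    (forall j k, In j S -> In k l -> ~ In k S -> g k <= g j).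
Proof.
  intros Hnd. induction m; intros Hm.
  - exists []. split; [constructor|]. split; [reflexivity|]. split; [intros j []|intros j k []].
  - destruct (IHm ltac:(lia)) as [S [HS1 [HS2 [HS3 HS4]]]].
    set (R := filter (fun x => negb (memb S x)) l).
    assert (HR : forall x, In x R <-> In x l /\ ~ In x S).
    { intros x. unfold R. rewrite filter_In. unfold memb. destruct (in_dec Nat.eq_dec x S); simpl; intuition. }
    assert (HRne : R <> []).
    { intros HR0.
      assert (Hincl : incl l S).
      { intros x Hx. destruct (in_dec Nat.eq_dec x S); auto. exfalso. assert (In x R) by (apply HR; auto). rewrite HR0 in H. auto. }
      assert (H := NoDup_incl_length Hnd Hincl). lia. }
    destruct (list_max_ex g R HRne) as [k0 [Hk0 Hmax]].
    apply HR in Hk0. destruct Hk0 as [Hk0l Hk0S].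
    exists (k0 :: S). split; [constructor; auto|]. split; [simpl; lia|]. split.
    + intros j [->|Hj]; auto.
    + intros j k [->|Hj] Hk HkS.
      * apply Hmax. apply HR. split; auto. intros Hc. apply HkS. right; auto.
      * apply HS4; auto. intros Hc. apply HkS. right; auto.
Qed.

Lemma rest_lemma (d : nat -> R) s p S : (1 <= s)%nat -> top_s_set s p d S ->
  sum_range s p (fun j => d j ^ 2) <= sumsq_list d S + (norm1_range s p d) ^ 2 / INR s.
Proof.
  intros Hs [HS1 [HS2 [HS3 HS4]]].
  set (l := seq s (p - s)).
  assert (Hl : forall k, In k l <-> (s <= k < p)%nat).
  { intros k. unfold l. rewrite in_seq. split; intros; lia. }
  assert (Hndl : NoDup l) by apply seq_NoDup.
  unfold norm1_range, sum_range.
  rewrite (sumR_seq (fun j => d j ^ 2) s (p - s)), (sumR_seq (fun j => Rabs (d j)) s (p - s)). fold l.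
  rewrite (sumL_filter _ (memb S) l).
  set (A := filter (memb S) l). set (B := filter (fun x => negb (memb S x)) l).
  assert (HA : Permutation A S).
  { apply NoDup_Permutation. apply NoDup_filter; auto. auto.
    intros x. unfold A. rewrite filter_In. unfold memb. destruct (in_dec Nat.eq_dec x S).
    - split; auto. intros _. split; auto. apply Hl. apply HS3; auto.
    - split; [intros [_ H]; discriminate|intros; contradiction]. }
  assert (HB : forall x, In x B <-> In x l /\ ~ In x S).
  { intros x. unfold B. rewrite filter_In. unfold memb. destruct (in_dec Nat.eq_dec x S); simpl; intuition. }
  rewrite (sumL_perm _ A S HA).
  assert (Hsq : sumsq_list d S = sumL (fun j => d j ^ 2) S) by reflexivity.
  rewrite Hsq.
  set (N2 := sumL (fun j => Rabs (d j)) l).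
  assert (HsR : 0 < INR s) by (apply lt_0_INR; lia).
  assert (HN2 : 0 <= N2) by (apply sumL_nonneg; intros; apply Rabs_pos).
  assert (Hk : forall k, In k B -> Rabs (d k) <= N2 / INR s).
  { intros k Hk. apply HB in Hk. destruct Hk as [Hkl HkS].
    assert (HlenS : length S = s).
    { assert (Hinc : incl (k :: S) l).
      { intros x [->|Hx]; auto. apply Hl. apply HS3; auto. }
      assert (Hnd : NoDup (k :: S)) by (constructor; auto).
      assert (H := NoDup_incl_length Hnd Hinc). simpl in H. unfold l in H. rewrite length_seq in H. lia. }
    assert (H1 : sumL (fun _ => Rabs (d k)) S <= sumL (fun j => Rabs (d j)) S).
    { apply sumL_le. intros j Hj. apply HS4; auto. apply Hl; auto. }
    rewrite sumL_const, HlenS in H1.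
    assert (H2 : sumL (fun j => Rabs (d j)) S <= N2).
    { unfold N2. rewrite (sumL_filter _ (memb S) l). fold A B. rewrite (sumL_perm _ A S HA).
      assert (0 <= sumL (fun j => Rabs (d j)) B) by (apply sumL_nonneg; intros; apply Rabs_pos). lra. }
    apply (Rmult_le_reg_l (INR s)); [lra|]. replace (INR s * (N2 / INR s)) with N2 by (field; lra). lra. }
  assert (HBsum : sumL (fun j => d j ^ 2) B <= N2 / INR s * sumL (fun j => Rabs (d j)) B).
  { rewrite <- sumL_scal. apply sumL_le. intros x Hx. specialize (Hk x Hx).
    assert (0 <= Rabs (d x)) by apply Rabs_pos.
    replace (d x ^ 2) with (Rabs (d x) * Rabs (d x)) by (rewrite <- Rabs_mult; rewrite Rabs_right; [ring|]; nra). nra. }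
  assert (HBN : sumL (fun j => Rabs (d j)) B <= N2).
  { unfold N2. rewrite (sumL_filter _ (memb S) l). fold A B.
    assert (0 <= sumL (fun j => Rabs (d j)) A) by (apply sumL_nonneg; intros; apply Rabs_pos). lra. }
  assert (HNs : 0 <= N2 / INR s) by (apply Rmult_le_pos; [lra|left; apply Rinv_0_lt_compat; lra]).
  assert (N2 / INR s * sumL (fun j => Rabs (d j)) B <= N2 / INR s * N2) by (apply Rmult_le_compat_l; auto).
  replace (N2 ^ 2 / INR s) with (N2 / INR s * N2) by (field; lra). lra.
Qed.


Theorem mainTheorem7
  (n p s : nat) (X : nat -> nat -> R) (y eps beta0 : nat -> R)
  (c lam lam0 c1 kappa0 kappa pinf : R) (pl dp d2p : R -> R) (betahat : nat -> R)
  (* setup *)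
  (Hn : (0 < n)%nat) (Hp : (0 < p)%nat) (Hsp : (s <= p)%nat)
  (Hcol : forall j, (j < p)%nat -> sqrt (sumR n (fun i => X i j ^ 2)) = sqrt (INR n))
  (Hmodel : forall i, (i < n)%nat -> y i = Xmul p X beta0 i + eps i)
  (Hsupp1 : forall j, (j < s)%nat -> beta0 j <> 0)
  (Hsupp2 : forall j, (s <= j < p)%nat -> beta0 j = 0)
  (Hc : 0 < c) (Hlam0 : lam0 = c * sqrt (ln (INR p) / INR n))
  (Hlam : 0 < lam)
  (* penalty p_lam : [0,oo) -> [0,oo), p_lam(0) = 0, p_lam(oo) = pinf *)
  (Hpl0 : pl 0 = 0) (Hplnn : forall t, 0 <= t -> 0 <= pl t)
  (Hpinf : forall e, 0 < e -> exists M, forall t, M <= t -> Rabs (pl t - pinf) < e)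
  (* p_lam continuously differentiable on (0,oo), with derivative dp *)
  (Hdp : forall t, 0 < t -> derivable_pt_lim pl t (dp t))
  (Hdpc : forall t, 0 < t -> continuity_pt dp t)
  (* Condition 1 *)
  (Hkappa0 : 0 < kappa0)
  (HRE : forall d : nat -> R, sqrt (sumR p (fun j => d j ^ 2)) = 1 -> (norm0 p d < 2 * s)%nat ->
           kappa0 <= / sqrt (INR n) * sqrt (sumR n (fun i => Xmul p X d i ^ 2)))
  (Hkappa : is_glb_R (kappa_ratios n p s X) kappa) (Hkappapos : 0 < kappa)
  (* Condition 2 *)
  (Hc1 : 0 <= c1 < 1)
  (Hincr : forall a b, 0 <= a -> a <= b -> pl a <= pl b)
  (Hconc : forall a b t, 0 <= a -> 0 <= b -> 0 <= t <= 1 ->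
             t * pl a + (1 - t) * pl b <= pl (t * a + (1 - t) * b))
  (Hlow : forall t, 0 <= t <= lam -> pl t >= / 2 * (lam ^ 2 - (Rmax (lam - t) 0) ^ 2))
  (Hdp1 : dp ((1 - c1) * lam) <= c1 * lam)
  (Hd2p : forall t, 0 < t <= (1 - c1) * lam -> derivable_pt_lim dp t (d2p t))
  (Hd2pdec : forall a b, 0 < a -> a <= b -> b <= (1 - c1) * lam -> - d2p b <= - d2p a)
  (Hdp2 : dp ((1 - c1) * lam) <= lam0 / 4)
  (Hbmin : forall j, (j < s)%nat ->
             Rabs (beta0 j) > Rmax ((1 - c1) * lam) (2 * / kappa0 * sqrt pinf))
  (* global minimizer *)
  (Hmin : forall b : nat -> R, objL n p X y lam0 pl betahat <= objL n p X y lam0 pl b)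
  (* event E *)
  (HE : forall j, (j < p)%nat -> Rabs (/ INR n * XTmul n X eps j) <= lam0 / 2) :
  let delta := fun j => betahat j - beta0 j in
  / INR n * sumR n (fun i => Xmul p X delta i ^ 2) + lam0 * norm1_range s p delta
    <= 7 * lam0 * norm1_range 0 s delta
  /\ norm1_range s p delta <= 7 * norm1_range 0 s delta
  /\ norm2_range 0 s delta <= 7 * lam0 * sqrt (INR s) / kappa ^ 2
  /\ norm2_range s p delta <= 56 * lam0 * sqrt (INR s) / kappa ^ 2.
Proof.
  intros delta.
  assert (HcolS : forall j, (j < p)%nat -> sumR n (fun i => X i j ^ 2) = INR n).
  { intros j Hj. apply sqrt_inj. apply sumR_nonneg; intros; apply pow2_ge_0. apply pos_INR. auto. }
  assert (Hl0 : 0 <= lam0) by (rewrite Hlam0; apply Rmult_le_pos; [lra|apply sqrt_pos]).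
  assert (HF := all_minimizers n p s X y eps beta0 lam lam0 c1 kappa0 pinf pl dp d2p Hn Hsp HcolS Hmodel Hsupp2
     Hl0 Hlam Hc1 Hpl0 Hplnn Hpinf Hdp Hkappa0 HRE Hincr Hconc Hlow Hdp1 Hd2p Hd2pdec Hdp2 Hbmin HE _ betahat (le_n _) Hmin).
  unfold Fval in HF. fold delta in HF.
  assert (Hs1 : (1 <= s)%nat).
  { destruct s as [|s']; [|lia]. exfalso.
    assert (Hemp : forall r, ~ kappa_ratios n p 0 X r).
    { intros r [d [S [[j [Hj Hd]] [Hcone _]]]].
      unfold norm1_range, sum_range in Hcone. simpl in Hcone. rewrite Nat.sub_0_r in Hcone.
      assert (H := sumR_ge_term p (fun k => Rabs (d (0 + k)%nat)) j ltac:(intros; apply Rabs_pos) Hj).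
      simpl in H. assert (0 < Rabs (d j)) by (apply Rabs_pos_lt; auto). lra. }
    destruct Hkappa as [_ Hk2]. assert (H := Hk2 (kappa + 1) (fun x Hx => False_ind _ (Hemp x Hx))). lra. }
  set (SX := sumR n (fun i => Xmul p X delta i ^ 2)) in *.
  set (N1 := norm1_range 0 s delta) in *.
  set (N2 := norm1_range s p delta) in *.
  assert (HnR : 0 < INR n) by (apply lt_0_INR; lia).
  assert (HSX : 0 <= SX) by (apply sumR_nonneg; intros; apply pow2_ge_0).
  assert (HD : 0 <= / INR n * SX) by (apply Rmult_le_pos; [left; apply Rinv_0_lt_compat|]; lra).
  assert (HN1 : 0 <= N1) by (unfold N1, norm1_range, sum_range; apply sumR_nonneg; intros; apply Rabs_pos).
  assert (HN2 : 0 <= N2) by (unfold N2, norm1_range, sum_range; apply sumR_nonneg; intros; apply Rabs_pos).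
  assert (C1 : / INR n * SX + lam0 * N2 <= 7 * lam0 * N1) by lra.
  assert (C2 : N2 <= 7 * N1).
  { destruct (le_lt_dec 2 p) as [Hp2|Hp2].
    - assert (Hln : 0 < ln (INR p)).
      { rewrite <- ln_1. apply ln_increasing; [lra|]. apply (lt_INR 1 p). lia. }
      assert (Hl0p : 0 < lam0).
      { rewrite Hlam0. apply Rmult_lt_0_compat; [lra|]. apply sqrt_lt_R0.
        apply Rmult_lt_0_compat; [lra|apply Rinv_0_lt_compat; lra]. }
      apply (Rmult_le_reg_l lam0); [lra|]. nra.
    - assert (p = 1%nat) by lia. assert (s = 1%nat) by lia. subst p s.
      unfold N2, norm1_range, sum_range. simpl. lra. }
  assert (Hk2 : 0 < kappa ^ 2) by nra.
  assert (Hss : 0 <= sqrt (INR s)) by apply sqrt_pos.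
  assert (HR3 : 0 <= 7 * lam0 * sqrt (INR s) / kappa ^ 2).
  { apply Rmult_le_pos; [nra|left; apply Rinv_0_lt_compat; lra]. }
  assert (HR4 : 0 <= 56 * lam0 * sqrt (INR s) / kappa ^ 2).
  { apply Rmult_le_pos; [nra|left; apply Rinv_0_lt_compat; lra]. }
  split; [exact C1|]. split; [exact C2|].
  destruct (Req_dec (sumR p (fun k => delta k ^ 2)) 0) as [Hz|Hnz].
  -
    assert (Hzero : forall k, (k < p)%nat -> delta k = 0).
    { intros k Hk. assert (H := sumR_ge_term p (fun k => delta k ^ 2) k ltac:(intros; apply pow2_ge_0) Hk).
      cbv beta in H. assert (0 <= delta k ^ 2) by apply pow2_ge_0. apply (Rsqr_0_uniq). unfold Rsqr. nra. }
    split.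
    + unfold norm2_range, sum_range. rewrite (sumR_ext _ _ (fun _ => 0)). rewrite sumR_zero, sqrt_0. lra.
      intros k Hk. rewrite Hzero by lia. ring.
    + unfold norm2_range, sum_range. rewrite (sumR_ext _ _ (fun _ => 0)). rewrite sumR_zero, sqrt_0. lra.
      intros k Hk. rewrite Hzero by lia. ring.
  - assert (Hex : exists j, (j < p)%nat /\ delta j <> 0).
    { destruct (sumR_indb_pos p (fun k => nzb (delta k))) as [j [Hj Hnzj]].
      - apply Rnot_ge_lt. intros Hcc. apply Hnz.
        assert (H0 := sumR_indb_nonneg p (fun k => nzb (delta k))).
        assert (Hc0 : sumR p (fun k => indb (nzb (delta k))) = 0) by lra.
        rewrite (sumR_ext _ _ (fun _ => 0)). apply sumR_zero. intros k Hk.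
        assert (H := sumR_ge_term p (fun k => indb (nzb (delta k))) k ltac:(intros; apply indb_le1) Hk).
        cbv beta in H. rewrite Hc0 in H. unfold indb, nzb in H. destruct (Req_EM_T (delta k) 0) as [->|]; [ring|lra].
      - exists j. split; auto. unfold nzb in Hnzj. destruct (Req_EM_T (delta j) 0); [discriminate|auto]. }
    destruct (top_exists (fun k => Rabs (delta k)) (seq s (p - s)) (Nat.min s (p - s)) (seq_NoDup _ _)
       ltac:(rewrite length_seq; lia)) as [S [HS1 [HS2 [HS3 HS4]]]].
    assert (Htop : top_s_set s p delta S).
    { split; [auto|]. split; [auto|]. split.
      - intros j Hj. apply HS3 in Hj. apply in_seq in Hj. lia.
      - intros j k Hj Hk HkS. apply HS4; auto. apply in_seq. lia. }
    set (x := norm2_range 0 s delta).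
    set (y2 := sqrt (sumsq_list delta S)).
    set (M := Rmax x y2).
    set (Q := / sqrt (INR n) * sqrt SX).
    assert (Hkr : kappa_ratios n p s X (Q / M)).
    { exists delta, S. split; [auto|]. split; [exact C2|]. split; [auto|]. reflexivity. }
    assert (HkQ : kappa <= Q / M) by (apply (proj1 Hkappa); auto).
    assert (Hx0 : 0 <= x) by apply sqrt_pos.
    assert (Hy0 : 0 <= y2) by apply sqrt_pos.
    assert (HxM : x <= M) by apply Rmax_l.
    assert (HyM : y2 <= M) by apply Rmax_r.
    assert (Hsn : 0 < sqrt (INR n)) by (apply sqrt_lt_R0; auto).
    assert (HQ0 : 0 <= Q) by (apply Rmult_le_pos; [left; apply Rinv_0_lt_compat; auto|apply sqrt_pos]).
    assert (HQ2 : Q ^ 2 = / INR n * SX).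
    { unfold Q. replace ((/ sqrt (INR n) * sqrt SX) ^ 2) with (/ (sqrt (INR n) * sqrt (INR n)) * (sqrt SX * sqrt SX)) by (field; lra).
      rewrite !sqrt_sqrt; lra. }
    assert (HMpos : 0 < M).
    { destruct (Req_dec M 0) as [H0|]; [|lra]. exfalso. rewrite H0 in HkQ. unfold Rdiv in HkQ. rewrite Rinv_0 in HkQ. lra. }
    assert (HkM : kappa * M <= Q).
    { apply (Rmult_le_compat_r M) in HkQ; [|lra]. replace (Q / M * M) with Q in HkQ by (field; lra). lra. }
    assert (Hkx : kappa * x <= Q) by nra.
    assert (Hky : kappa * y2 <= Q) by nra.
    assert (Hkx2 : kappa ^ 2 * x ^ 2 <= / INR n * SX).
    { rewrite <- HQ2. replace (kappa ^ 2 * x ^ 2) with ((kappa * x) ^ 2) by ring. apply pow_incr. split; [nra|auto]. }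
    assert (HN1x : N1 <= sqrt (INR s) * x).
    { assert (Hcs := sumR_CS s (fun k => Rabs (delta k))).
      assert (E1 : N1 = sumR s (fun k => Rabs (delta k))) by (unfold N1; apply norm1_0).
      assert (E2 : x * x = sumR s (fun k => delta k ^ 2)).
      { unfold x, norm2_range, sum_range. rewrite Nat.sub_0_r. apply sqrt_sqrt. apply sumR_nonneg; intros; apply pow2_ge_0. }
      assert (E3 : sumR s (fun k => Rabs (delta k) ^ 2) = sumR s (fun k => delta k ^ 2)).
      { apply sumR_ext. intros k Hk. rewrite <- !Rsqr_pow2. symmetry. apply Rsqr_abs. }
      rewrite <- E1, E3, <- E2 in Hcs.
      assert (Hsq : (sqrt (INR s) * x) ^ 2 = INR s * (x * x)).
      { replace ((sqrt (INR s) * x) ^ 2) with (sqrt (INR s) * sqrt (INR s) * (x * x)) by ring.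
        rewrite sqrt_sqrt; [ring|apply pos_INR]. }
      apply Rsqr_incr_0_var; unfold Rsqr; nra. }
    assert (HDx : / INR n * SX <= 7 * lam0 * sqrt (INR s) * x) by nra.
    assert (C3 : x <= 7 * lam0 * sqrt (INR s) / kappa ^ 2).
    { destruct (Req_dec x 0) as [->|Hxn]; [lra|].
      assert (Hxp : 0 < x) by lra.
      assert (kappa ^ 2 * x <= 7 * lam0 * sqrt (INR s)).
      { apply (Rmult_le_reg_r x); [lra|]. nra. }
      apply (Rmult_le_reg_l (kappa ^ 2)); [lra|]. replace (kappa ^ 2 * (7 * lam0 * sqrt (INR s) / kappa ^ 2)) with (7 * lam0 * sqrt (INR s)) by (field; lra). lra. }
    split; [exact C3|].
    set (K := 7 * lam0 * sqrt (INR s) / kappa ^ 2) in *.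
    assert (HQK : Q <= kappa * K).
    { assert (HK0 : 0 <= K) by (unfold K; lra).
      assert (E : 7 * lam0 * sqrt (INR s) = kappa ^ 2 * K) by (unfold K; field; lra).
      assert (Hc0 : 0 <= 7 * lam0 * sqrt (INR s)) by nra.
      assert (H1a : 7 * lam0 * sqrt (INR s) * x <= 7 * lam0 * sqrt (INR s) * K) by (apply Rmult_le_compat_l; auto).
      assert (H1 : Q ^ 2 <= 7 * lam0 * sqrt (INR s) * K) by lra.
      rewrite E in H1.
      apply Rsqr_incr_0_var; unfold Rsqr; nra. }
    assert (Hy2 : y2 <= K).
    { apply (Rmult_le_reg_l kappa); [lra|]. lra. }
    assert (Hrest := rest_lemma delta s p S Hs1 Htop). fold N2 in Hrest.
    set (SS := sumsq_list delta S) in *.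
    assert (HSS : 0 <= SS).
    { unfold SS, sumsq_list. clear. induction S as [|a S IH]; cbn [fold_right]; [lra|]. assert (0 <= delta a ^ 2) by apply pow2_ge_0. lra. }
    set (RR := N2 ^ 2 / INR s) in *.
    assert (HsR : 0 < INR s) by (apply lt_0_INR; lia).
    assert (HRR : 0 <= RR) by (unfold RR; apply Rmult_le_pos; [apply pow2_ge_0|left; apply Rinv_0_lt_compat; lra]).
    assert (HRRb : sqrt RR <= 7 * x).
    { rewrite <- (sqrt_square (7 * x)) by lra. apply sqrt_le_1_alt.
      assert (Hs2 : sqrt (INR s) * sqrt (INR s) = INR s) by (apply sqrt_sqrt; lra).
      unfold RR. apply (Rmult_le_reg_l (INR s)); [lra|].
      replace (INR s * (N2 ^ 2 / INR s)) with (N2 * N2) by (field; lra).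
      assert (N2 <= 7 * (sqrt (INR s) * x)) by lra.
      assert (N2 * N2 <= (7 * (sqrt (INR s) * x)) * (7 * (sqrt (INR s) * x))) by (apply Rmult_le_compat; lra).
      nra. }
    unfold norm2_range. eapply Rle_trans. apply sqrt_le_1_alt. exact Hrest.
    eapply Rle_trans. apply sqrt_add_le; auto. fold y2.
    assert (E56 : 56 * lam0 * sqrt (INR s) / kappa ^ 2 = 8 * K) by (unfold K; field; lra).
    rewrite E56. lra.
Qed.
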